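(* Let $p_1=2<p_2=3<p_3=5<\cdots$ denote the primes in increasing order, and fix an integer $K\ge 1$. Starting from the set $M=\{4,5,6,\dots\}$ of integers $\ge 4$, remove every integer of the form $2np_k$ or $np_k-1$ with $n\ge 2$ an integer and $1\le k\le K$. Then an integer $m$ with $4\le m<p_{K+1}^2-2$ remains after this removal if and only if $m=2q$ for a Sophie Germain prime $q$, i.e. $m=2q$ where both $q$ and $2q+1$ are prime.
   Context: A prime $q$ is a Sophie Germain prime if $2q+1$ is also prime (then $2q+1$ is called a safe prime). *)

(* Defs.v *)
From mathcomp Require Import all_boot.
Set Implicit Arguments. Unset Strict Implicit. Unset Printing Implicit Defensive.

(* p_ k := the k-th prime, 1-indexed: p_ 1 = 2, p_ 2 = 3, p_ 3 = 5, ...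
   Characterized as: p is prime and exactly k-1 primes are smaller than p. *)
Definition is_kth_prime (k p : nat) : Prop :=
  prime p /\ count prime (iota 0 p) = k.-1.

Definition removed (K m : nat) : Prop :=
  exists n k p, [/\ 2 <= n, 1 <= k <= K, is_kth_prime k p &
                    m = 2 * n * p \/ m = n * p - 1].

Definition sophie_germain (q : nat) : Prop := prime q /\ prime (2 * q + 1).

(* Main.v *)
Require Import Defs.
From mathcomp Require Import all_boot.
From mathcomp Require Import zify.

Lemma compo n : 1 < n -> ~~ prime n ->
  exists p k, [/\ prime p, p * p <= n, 2 <= k & n = k * p].
Proof.
move=> n1 np.
have pp := pdiv_prime n1.
have hsq : pdiv n ^ 2 <= n.
  rewrite leqNgt; apply/negP => h; move: np; rewrite ltn_pdiv2_prime //; lia.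
exists (pdiv n), (n %/ pdiv n); split => //.
- have e := divnK (pdiv_dvd n).
  have g1 := prime_gt1 pp.
  case: (n %/ pdiv n) e => [|[|k]] e //; first lia.
  by move: np; rewrite -e mul1n pp.
- by rewrite divnK // pdiv_dvd.
Qed.

Lemma small_prime K P p : is_kth_prime K.+1 P -> prime p -> p < P ->
  exists k, 1 <= k <= K /\ is_kth_prime k p.
Proof.
move=> [PP hc] pp lt.
exists (count prime (iota 0 p)).+1; split; last by split.
have : count prime (iota 0 P) >= (count prime (iota 0 p)).+1.
  rewrite -(subnKC (ltnW lt)) iotaD count_cat add0n.
  case E: (P - p) => [|r]; first lia.
  by rewrite /= pp; lia.
rewrite hc /=; lia.
Qed.

Arguments small_prime {K P p}.
Arguments compo {n}.

Theorem mainTheorem2 (K : nat) (hK : 1 <= K) (P : nat) (hP : is_kth_prime K.+1 P)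
  (m : nat) (hm4 : 4 <= m) (hmP : m < P ^ 2 - 2) :
  ~ removed K m <-> exists q, m = 2 * q /\ sophie_germain q.
Proof.
split.
- move=> nr.
  have P2 : 2 < P.
    case: hP => _; case: P {hmP} => [|[|[|P]]] //=; lia.
  case: (boolP (odd m)) => om.
    exfalso; apply: nr.
    have [k [hk1 hk2]] := small_prime hP (isT : prime 2) P2.
    have em : m.+1 = 2 * (m.+1 %/ 2).
      by rewrite mulnC divnK // dvdn2 /= om.
    exists (m.+1 %/ 2), k, 2; split => //; first lia.
    right; lia.
  have em : m = 2 * m./2 by move: om; case/boolP: (odd m) => //; lia.
  exists m./2; split => //; split.
  + apply/negPn/negP => nq.
    have h1 : 1 < m./2 by lia.
    have [p [k [pp hpp k2 e]]] := compo h1 nq.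
    apply: nr.
    have lt : p < P.
      rewrite ltnNge; apply/negP => h.
      have : P * P <= p * p by apply: leq_mul.
      have eP : P ^ 2 = P * P by []; lia.
    have [k' [hk1 hk2]] := small_prime hP pp lt.
    exists k, k', p; split => //; left; lia.
  + apply/negPn/negP => nq.
    have h1 : 1 < 2 * m./2 + 1 by lia.
    have [p [k [pp hpp k2 e]]] := compo h1 nq.
    apply: nr.
    have lt : p < P.
      rewrite ltnNge; apply/negP => h.
      have : P * P <= p * p by apply: leq_mul.
      have eP : P ^ 2 = P * P by []; lia.
    have [k' [hk1 hk2]] := small_prime hP pp lt.
    exists k, k', p; split => //; right; lia.
- move=> [q [-> [qp q1p]]] [n [k [p [n2 _ [pp _] [e|e]]]]].
  + have g := prime_gt1 pp.
    have e' : q = n * p by lia.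
    move: qp; rewrite e' => /primeP [_ /(_ p)].
    rewrite dvdn_mull // => /(_ isT) /orP [] /eqP; nia.
  + have g := prime_gt1 pp.
    have e' : 2 * q + 1 = n * p by lia.
    move: q1p; rewrite e' => /primeP [_ /(_ p)].
    rewrite dvdn_mull // => /(_ isT) /orP [] /eqP; nia.
Qed.
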